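(* Let $c_1,\dots,c_t$ and $d_1,\dots,d_r$ be block columns in $C_n^*$ such that every $c_i$ consists only of unbarred letters, every $d_j$ consists only of barred letters, and $w=c_1\cdots c_t\,d_1\cdots d_r$ is a column. Let $x_i$ be the largest (rightmost) letter of $c_i$ and let $\overline{y_j}$ be the smallest (leftmost) letter of $d_j$. Then $w$ is admissible if and only if $N_z(w)\le z$ for every $z\in\{x_1,\dots,x_t,y_1,\dots,y_r\}$.
   Context: Fix $n\ge 1$ and the totally ordered alphabet $C_n=\{1<2<\cdots<n<\overline{n}<\overline{n-1}<\cdots<\overline{1}\}$; letters $1,\dots,n$ are unbarred, $\overline 1,\dots,\overline n$ barred. $C_n^*$ is the free monoid of words on $C_n$. A column is a word $x_1\cdots x_k$ with $x_1<x_2<\cdots<x_k$. For a column $u$ and $z\in\{1,\dots,n\}$, $N_z(u)$ is the number of letters $x$ of $u$ with $x\le z$ or $x\ge \overline z$. A column $u$ is admissible if it is nonempty and $N_z(u)\le z$ for all $z=1,\dots,n$. A block column is a column $x_1\cdots x_k$ in which each $x_{i+1}$ is the immediate successor of $x_i$ in the total order of $C_n$. *)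

(* Defs.v *)
From mathcomp Require Import all_boot.
Set Implicit Arguments. Unset Strict Implicit. Unset Printing Implicit Defensive.

(* Letters of C_n: (false, i) is the unbarred letter i, (true, i) is the
   barred letter \overline{i}; a letter is in C_n when 1 <= i <= n. *)
Definition letter := (bool * nat)%type.
Definition unbar (i : nat) : letter := (false, i).
Definition bar (i : nat) : letter := (true, i).
Definition is_barred (x : letter) : bool := x.1.
Definition in_Cn (n : nat) (x : letter) : bool := (0 < x.2 <= n).

(* Position in the total order 1 < 2 < ... < n < \bar n < ... < \bar 1:
   i has rank i, \bar i has rank 2n+1-i. *)
Definition rank (n : nat) (x : letter) : nat :=
  if x.1 then (2 * n).+1 - x.2 else x.2.
Definition leC (n : nat) (x y : letter) : bool := rank n x <= rank n y.
Definition ltC (n : nat) (x y : letter) : bool := rank n x < rank n y.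

Definition word (n : nat) (w : seq letter) : bool := all (in_Cn n) w.

Definition column (n : nat) (u : seq letter) : bool :=
  word n u && sorted (ltC n) u.

Definition immsucc (n : nat) (x y : letter) : bool := rank n y == (rank n x).+1.
Definition block_column (n : nat) (u : seq letter) : bool :=
  column n u && sorted (immsucc n) u.

Definition Nz (n z : nat) (u : seq letter) : nat :=
  count (fun x => leC n x (unbar z) || leC n (bar z) x) u.

Definition admissible (n : nat) (u : seq letter) : bool :=
  (u != [::]) && [forall z : 'I_n.+1, (0 < z) ==> (Nz n z u <= z)].

Definition dflt_letter : letter := (false, 0).

(* Main.v *)
Require Import Defs.
From mathcomp Require Import all_boot zify.
Lemma NzE n z u : z <= n -> all (in_Cn n) u -> Nz n z u = count (fun x => x.2 <= z) u.
Proof.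
move=> hz /allP hu; apply: eq_in_count => -[[] i] /hu; rewrite /in_Cn /leC /rank /= => /andP[h1 h2].
  apply/idP/idP; [case/orP; lia | move=> h; apply/orP; right; lia].
apply/idP/idP; [case/orP; lia | move=> h; apply/orP; left; lia].
Qed.
Lemma countS z u : count (fun x : letter => x.2 <= z.+1) u = count (fun x : letter => x.2 <= z) u + count (fun x : letter => x.2 == z.+1) u.
Proof. elim: u => //= x u ->. case: (ltngtP x.2 z.+1) => h; lia. Qed.
Lemma next_in (r : rel letter) s x x0 : sorted r s -> x \in s -> x != last x0 s -> exists2 y, y \in s & r x y.
Proof.
elim: s x0 => // a s IH x0 /= hp; rewrite in_cons => /orP[/eqP->|hx] hl.
  case: s hp hl {IH} => [|b s] /=; first by rewrite eqxx.
  by case/andP => hab _ _; exists b; rewrite ?inE ?eqxx ?orbT.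
case: s IH hp hx hl => // b s IH hp hx hl.
have [y hy hr] := IH a (path_sorted hp) hx hl.
by exists y => //; rewrite inE hy orbT.
Qed.
Lemma prev_in (r : rel letter) s x x0 : sorted r s -> x \in s -> x != head x0 s -> exists2 y, y \in s & r y x.
Proof.
elim: s x0 => // a s IH x0 /= hp; rewrite in_cons => /orP[/eqP->|hx] hl; first by rewrite eqxx in hl.
case: s IH hp hx hl => // b s IH /= /andP[hab hp] hx hl.
case: (eqVneq x b) => [->|hxb]; first by exists a; rewrite ?inE ?eqxx.
have [y hy hr] := IH b hp hx hxb.
by exists y => //; rewrite inE hy orbT.
Qed.

Theorem proposition2p1 (n : nat) (cs ds : seq (seq letter)) :
  1 <= n ->
  (forall c, c \in cs -> (c != [::]) && block_column n c
                         && all (fun x => ~~ is_barred x) c) ->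
  (forall d, d \in ds -> (d != [::]) && block_column n d
                         && all is_barred d) ->
  column n (flatten cs ++ flatten ds) ->
  flatten cs ++ flatten ds != [::] ->
  (admissible n (flatten cs ++ flatten ds) <->
   (forall z, z \in [seq (last dflt_letter c).2 | c <- cs]
                    ++ [seq (head dflt_letter d).2 | d <- ds] ->
              Nz n z (flatten cs ++ flatten ds) <= z)).
Proof.
move=> n1 hc hd hcol hne.
set W := flatten cs ++ flatten ds.
set S := _ ++ _.
have hW : all (in_Cn n) W by case/andP: hcol.
have hin : forall x, x \in W -> 0 < x.2 <= n by move=> x /(allP hW).
have hcW : forall c x, c \in cs -> x \in c -> x \in W.
  by move=> c x hcin hx; rewrite mem_cat; apply/orP; left; apply/flattenP; exists c.
have hdW : forall d x, d \in ds -> x \in d -> x \in W.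
  by move=> d x hdin hx; rewrite mem_cat; apply/orP; right; apply/flattenP; exists d.
split.
  case/andP => _ /forallP hall z hz.
  have hzn : 0 < z <= n.
    move: hz; rewrite mem_cat => /orP[/mapP[c hcin ->]|/mapP[d hdin ->]].
      case/andP: (hc c hcin) => /andP[]; case: c hcin => // a c hcin _ _ _.
      by apply: hin; apply: (hcW _ _ hcin); rewrite /= mem_last.
    case/andP: (hd d hdin) => /andP[]; case: d hdin => // a d hdin _ _ _.
    by apply: hin; apply: (hdW _ _ hdin); rewrite /= mem_head.
  case/andP: hzn => h0 hzn.
  have hzo : z < n.+1 by [].
  by have := hall (Ordinal hzo); rewrite /= h0.
move=> hS; apply/andP; split => //; apply/forallP => -[z hz] /=; apply/implyP => z0.
have step : forall z, 0 < z <= n -> ((false, z) \in W) || ((true, z) \in W) ->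
   z \in S \/ (z.+1 <= n /\ ((false, z.+1) \in W) || ((true, z.+1) \in W)).
  move=> y /andP[y0 yn] /orP[hy|hy].
    move: hy; rewrite mem_cat => /orP[/flattenP[c hcin hy]|/flattenP[d hdin hy]]; last first.
      by case/andP: (hd d hdin) => _ /allP /(_ _ hy).
    case: (eqVneq (false, y) (last dflt_letter c)) => [he|hne'].
      by left; rewrite mem_cat; apply/orP; left; apply/mapP; exists c => //; rewrite -he.
    case/andP: (hc c hcin) => /andP[_ /andP[_ hsort]] hub.
    have [x hx hr] := @next_in _ _ _ _ hsort hy hne'.
    move: (allP hub x hx) hr; case: x hx => -[] i hx //= _; rewrite /immsucc /rank /= => /eqP hi.
    subst i; right; have hxW := hcW _ _ hcin hx.
    have := hin _ hxW; case/andP => _ hle; split => //.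
    by rewrite hxW.
  move: hy; rewrite mem_cat => /orP[/flattenP[c hcin hy]|/flattenP[d hdin hy]].
    by case/andP: (hc c hcin) => _ /allP /(_ _ hy).
  case: (eqVneq (true, y) (head dflt_letter d)) => [he|hne'].
    by left; rewrite mem_cat; apply/orP; right; apply/mapP; exists d => //; rewrite -he.
  case/andP: (hd d hdin) => /andP[_ /andP[_ hsort]] hub.
  have [x hx hr] := @prev_in _ _ _ _ hsort hy hne'.
  move: (allP hub x hx) hr; case: x hx => -[] i hx //= _; rewrite /immsucc /rank /= => /eqP hi.
  have hxW := hdW _ _ hdin hx; have := hin _ hxW; case/andP => /= i0 iN.
  have hi' : i = y.+1 by lia.
  subst i; right; split => //; by rewrite hxW orbT.
have cnt : forall y, ((false, y) \in W) || ((true, y) \in W) -> 0 < count (fun x : letter => x.2 == y) W.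
  move=> y /orP[h|h]; rewrite -has_count; apply/hasP; by [exists (false, y) | exists (true, y)].
have A : forall k y, n - y = k -> 0 < y <= n -> ((false, y) \in W) || ((true, y) \in W) -> Nz n y W <= y.
  elim=> [|k IH] y hk hy hp; (case: (step y hy hp) => [/hS //|[hy1 hp1]]).
    lia.
  have := IH y.+1 ltac:(lia) ltac:(lia) hp1.
  rewrite !NzE // ?countS; last by lia.
  move=> h; rewrite -ltnS; apply: leq_trans h; rewrite -{1}(addn1 (count _ _)) leq_add2l; exact: cnt.
have B : forall y, y <= n -> Nz n y W <= y.
  elim=> [|y IH] hy.
    rewrite NzE // leqNgt -has_count; apply/negP => /hasP[x /hin /andP[h1 _] /= h2]; by rewrite leqNgt h1 in h2.
  case hp : (((false, y.+1) \in W) || ((true, y.+1) \in W)).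
    by apply: (A (n - y.+1)) => //; rewrite hy.
  rewrite (@NzE n y.+1 W hy hW) countS -(@NzE n y W) //; last by apply: ltnW.
  have -> : count (fun x : letter => x.2 == y.+1) W = 0.
    apply/eqP; rewrite -leqn0 leqNgt -has_count; apply/hasP => -[[[] i] hx /= /eqP hi]; subst i;
    by rewrite hx ?orbT in hp.
  by rewrite addn0; exact: leq_trans (IH (ltnW hy)) (leqnSn y).
by apply: B.
Qed.
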